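(* Let $M,K\in\mathbb{R}^{m\times m}$ be symmetric positive semidefinite matrices with at least one of them positive definite, and let $\nu,\omega,\theta,H_1,H_2,R,P_\alpha$ be as defined in the context. Then $\rho(P_\alpha)<1$ for every $\alpha>0$, i.e. the MBAS iteration converges unconditionally.
   Context: $\nu>0$, $\omega>0$, $\theta=1+\nu\omega^2$, $I$ is the $m\times m$ identity, $H_1=\begin{pmatrix} M&0\\0&M\end{pmatrix}$, $H_2=\begin{pmatrix} K&0\\0&K\end{pmatrix}$, $R=\frac{1}{\sqrt{\nu\theta}}\begin{pmatrix} -i\omega\nu I & \sqrt{\nu} I\\ -\sqrt{\nu} I & i\omega\nu I\end{pmatrix}$, and for $\alpha>0$, $P_\alpha=(\alpha I_{2m}+\sqrt{\nu\theta}H_2)^{-1}(\alpha I_{2m}+\theta RH_1)(\alpha I_{2m}+\theta H_1)^{-1}(\alpha I_{2m}-\sqrt{\nu\theta}RH_2)$. $\rho(\cdot)$ denotes spectral radius. *)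

(* Defs.v *)
From HB Require Import structures.
From mathcomp Require Import all_boot all_order all_algebra.
From mathcomp Require Import complex.
Set Implicit Arguments. Unset Strict Implicit. Unset Printing Implicit Defensive.
Import Order.TTheory GRing.Theory Num.Theory.
Local Open Scope ring_scope.

Definition spsd (R : rcfType) (m : nat) (A : 'M[R]_m) : Prop :=
  A^T = A /\ forall x : 'cV[R]_m, 0 <= (x^T *m A *m x) 0 0.

Definition spd (R : rcfType) (m : nat) (A : 'M[R]_m) : Prop :=
  A^T = A /\ forall x : 'cV[R]_m, x != 0 -> 0 < (x^T *m A *m x) 0 0.

Definition cmx (R : rcfType) (m n : nat) (A : 'M[R]_(m, n)) : 'M[R[i]]_(m, n) :=
  map_mx (fun x => (x%:C)%C) A.

(* spectral radius < r : every eigenvalue has modulus < r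
   (rho(A) is the maximum of the moduli of the finitely many eigenvalues) *)
Definition spectral_radius_lt (C : numClosedFieldType) (n : nat) (A : 'M[C]_n) (r : C) : Prop :=
  forall lam : C, eigenvalue A lam -> `|lam| < r.

Section MBAS.
Variables (R : rcfType) (m : nat) (M K : 'M[R]_m) (nu omega alpha : R).

Definition theta : R := 1 + nu * omega ^+ 2.

Definition H1 : 'M[R[i]]_(m + m) := cmx (block_mx M 0 0 M).
Definition H2 : 'M[R[i]]_(m + m) := cmx (block_mx K 0 0 K).

Definition sq : R[i] := ((Num.sqrt (nu * theta))%:C)%C.

Definition Rmx : 'M[R[i]]_(m + m) :=
  sq^-1 *: block_mx ((- 'i%C * ((omega * nu)%:C)%C) *: (1%:M : 'M[R[i]]_m))
                    (((Num.sqrt nu)%:C)%C *: 1%:M)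
                    (- ((Num.sqrt nu)%:C)%C *: 1%:M)
                    (('i%C * ((omega * nu)%:C)%C) *: 1%:M).

Definition Palpha : 'M[R[i]]_(m + m) :=
  let a := (alpha%:C)%C in
  let I2 : 'M[R[i]]_(m + m) := 1%:M in
  invmx (a *: I2 + sq *: H2) *m (a *: I2 + (theta%:C)%C *: (Rmx *m H1))
    *m invmx (a *: I2 + (theta%:C)%C *: H1) *m (a *: I2 - sq *: (Rmx *m H2)).
End MBAS.

(* Main.v *)
Require Import Defs.
From HB Require Import structures.
From mathcomp Require Import all_boot all_order all_algebra.
From mathcomp Require Import complex.
From mathcomp Require Import ring.
Import Order.TTheory GRing.Theory Num.Theory.
Local Open Scope ring_scope.

Set Implicit Arguments. Unset Strict Implicit. Unset Printing Implicit Defensive.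
Section Work.
Variable R : rcfType.
Local Notation C := (R[i]).

Definition ct n p (A : 'M[C]_(n,p)) : 'M[C]_(p,n) := (map_mx (@conjc R) A)^T.

Lemma ctM n p q (A : 'M[C]_(n,p)) (B : 'M[C]_(p,q)) : ct (A *m B) = ct B *m ct A.
Proof. by rewrite /ct map_mxM trmx_mul. Qed.

Lemma ctD n p (A B : 'M[C]_(n,p)) : ct (A + B) = ct A + ct B.
Proof. by apply/matrixP=> i j; rewrite !mxE rmorphD. Qed.

Lemma ctN n p (A : 'M[C]_(n,p)) : ct (- A) = - ct A.
Proof. by apply/matrixP=> i j; rewrite !mxE rmorphN. Qed.

Lemma ctZ n p c (A : 'M[C]_(n,p)) : ct (c *: A) = (c^*)%C *: ct A.
Proof. by apply/matrixP=> i j; rewrite !mxE rmorphM. Qed.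

Lemma ct_cmx n p (P : 'M[R]_(n,p)) : ct (cmx P) = cmx P^T.
Proof. by apply/matrixP=> i j; rewrite !mxE conjc_real. Qed.

Lemma ct_scalar n c : ct (c%:M : 'M[C]_n) = (c^*)%C%:M.
Proof. by rewrite /ct map_scalar_mx tr_scalar_mx. Qed.

Definition nrm n (x : 'rV[C]_n) : C := (x *m ct x) 0 0.

Lemma nrmE n (x : 'rV[C]_n) : nrm x = \sum_j x 0 j * ((x 0 j)^*)%C.
Proof. by rewrite /nrm !mxE; apply: eq_bigr => j _; rewrite !mxE. Qed.

Lemma nrm_ge0 n (x : 'rV[C]_n) : 0 <= nrm x.
Proof. by rewrite nrmE; apply: sumr_ge0 => j _; apply: mulcJ_ge0. Qed.

Lemma nrm_eq0 n (x : 'rV[C]_n) : nrm x = 0 -> x = 0.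
Proof.
rewrite nrmE => /psumr_eq0P H; apply/matrixP => i j.
rewrite (ord1 i) mxE; have := H (fun j _ => mulcJ_ge0 _) j isT.
by move/eqP; rewrite mulf_eq0 conjc_eq0 orbb => /eqP.
Qed.

Lemma mx11_tr (X : 'M[C]_1) : X^T = X.
Proof. by apply/matrixP=> i j; rewrite mxE (ord1 i) (ord1 j). Qed.

Lemma form_real n (P : 'M[R]_n) (z : 'rV[C]_n) : P^T = P ->
  (z *m cmx P *m ct z) 0 0 =
  (((map_mx (@complex.Re R) z) *m P *m (map_mx (@complex.Re R) z)^T) 0 0 +
   ((map_mx (@complex.Im R) z) *m P *m (map_mx (@complex.Im R) z)^T) 0 0)%:C%C.
Proof.
move=> sP; set a := map_mx _ z; set b := map_mx _ z.
have ez : z = cmx a + 'i%C *: cmx b.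
  by apply/matrixP=> i j; rewrite !mxE [LHS]complexE.
have ect : ct z = (cmx a)^T - 'i%C *: (cmx b)^T.
  have ci : ('i%C)^*%C = - 'i%C :> C.
    by apply/eqP; rewrite eq_complex /= oppr0 !eqxx.
  by rewrite {1}ez ctD ctZ !ct_cmx /cmx -!map_trmx ci scaleNr.
have eBA : cmx b *m cmx P *m (cmx a)^T = cmx a *m cmx P *m (cmx b)^T.
  rewrite -[LHS]mx11_tr !trmx_mul trmxK -mulmxA; congr (_ *m (_ *m _)).
  by rewrite /cmx map_trmx sP.
rewrite ect {1}ez.
rewrite mulmxDl !mulmxBr -!scalemxAl -!scalemxAr mulmxDl -!scalemxAl eBA.
have E x y : (cmx x *m cmx P *m (cmx y)^T) 0 0 = ((x *m P *m y^T) 0 0)%:C%C.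
  by rewrite /cmx map_trmx -!map_mxM mxE.
have rD (u w : R) : ((u + w)%:C = u%:C + w%:C :> C)%C.
  by apply/eqP; rewrite eq_complex /= addr0 !eqxx.
rewrite mulmxDl -scalemxAl rD -(E _ _ a a) -(E _ _ b b).
move: (cmx a *m _ *m _) (cmx a *m _ *m (cmx b)^T) (cmx b *m _ *m (cmx b)^T) => X Y W.
rewrite !mxE.
have h := sqr_i R.
move: ('i%C) h => j h.
rewrite mulrDr mulrA -expr2 h; ring.
Qed.

Lemma spd_spsd n (P : 'M[R]_n) : spd P -> spsd P.
Proof.
move=> [sP hP]; split=> // x; have [->|nx] := eqVneq x 0.
  by rewrite mulmx0 mxE.
exact/ltW/hP.
Qed.

Lemma form_ge0 n (P : 'M[R]_n) : spsd P -> forall z : 'rV[C]_n, 0 <= (z *m cmx P *m ct z) 0 0.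
Proof.
move=> [sP hP] z; rewrite form_real // ler0c.
set a := map_mx _ z; set b := map_mx _ z.
by apply: addr_ge0; [have := hP a^T| have := hP b^T]; rewrite trmxK.
Qed.

Lemma trmx_neq0 m n (x : 'M[R]_(m,n)) : x != 0 -> x^T != 0.
Proof. by apply: contra => /eqP h; apply/eqP/trmx_inj; rewrite h trmx0. Qed.

Lemma form_gt0 n (P : 'M[R]_n) : spd P -> forall z : 'rV[C]_n, z != 0 ->
  0 < (z *m cmx P *m ct z) 0 0.
Proof.
move=> hPd z nz; have [sP hP] := hPd; have [_ hP0] := spd_spsd hPd.
rewrite form_real // ltcE /= eqxx /=.
set a := map_mx _ z; set b := map_mx _ z.
have [a0|na] := eqVneq a 0.
  have nb : b != 0.
    apply: contra nz => /eqP b0; apply/eqP/matrixP=> i j.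
    have ha : a i j = 0 by rewrite a0 mxE.
    have hb : b i j = 0 by rewrite b0 mxE.
    rewrite /a /b !mxE in ha hb; rewrite [z i j]complexE ha hb /=.
    by apply/eqP; rewrite eq_complex /= mxE /= !mul0r !mulr0 !subr0 !addr0 !eqxx.
  rewrite -[0]addr0; apply: ler_ltD; first by have := hP0 a^T; rewrite trmxK.
  by have := hP _ (trmx_neq0 nb); rewrite trmxK.
rewrite -[0]addr0; apply: ltr_leD; first by have := hP _ (trmx_neq0 na); rewrite trmxK.
by have := hP0 b^T; rewrite trmxK.
Qed.

Lemma expand n (c : C) (X Y : 'M[C]_n) :
  (c%:M + X) *m (c%:M + Y) = (c*c)%:M + (c *: X + c *: Y + X *m Y).
Proof.
rewrite mulmxDl !mulmxDr -scalar_mxM mul_scalar_mx mul_mx_scalar.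
by rewrite -!addrA; congr (_ + _); rewrite addrCA.
Qed.

Lemma Cpos (a : R) : 0 < a -> 0 < (a%:C)%C :> C.
Proof. by move=> ha; rewrite ltcE /= eqxx. Qed.

Lemma Cnneg (a : R) : 0 <= a -> 0 <= (a%:C)%C :> C.
Proof. by move=> ha; rewrite ler0c. Qed.

Section Key.
Variables (n : nat) (S N : 'M[C]_n) (a b : R).
Hypotheses (hN : ct N = N) (hS : ct S = - S) (hSS : S *m S = - 1%:M)
  (hSN : S *m N = N *m S) (ha : 0 < a) (hb : 0 <= b)
  (hf : forall z : 'rV[C]_n, 0 <= (z *m N *m ct z) 0 0).

Let ac := (a%:C)%C.
Let bc := (b%:C)%C.
Let Cm := ac *: (1%:M : 'M[C]_n) + bc *: N.
Let Bm := ac *: (1%:M : 'M[C]_n) + bc *: (S *m N).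

Lemma Cunit : Cm \in unitmx.
Proof.
rewrite unitmxE unitfE; apply/negP => /det0P [z nz hz].
have : (z *m Cm *m ct z) 0 0 = ac * nrm z + bc * (z *m N *m ct z) 0 0.
  rewrite /Cm mulmxDr scalemx1 mul_mx_scalar -scalemxAr mulmxDl -!scalemxAl.
  by rewrite mxE [in X in _ + X]mxE mxE.
rewrite hz mul0mx mxE => /esym /eqP.
rewrite paddr_eq0; last 2 first.
- by apply: mulr_ge0; [apply/ltW/Cpos|apply: nrm_ge0].
- by apply: mulr_ge0; [apply/Cnneg|apply: hf].
rewrite mulf_eq0 (negbTE (lt0r_neq0 (Cpos ha))) /= => /andP [/eqP /nrm_eq0 z0 _].
by rewrite z0 eqxx in nz.
Qed.

Lemma BC_comm : Bm *m Cm = Cm *m Bm.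
Proof.
rewrite /Bm /Cm !scalemx1 !expand; congr (_ + _).
rewrite -!scalemxAl -!scalemxAr !mulmxA -hSN; congr (_ + _); exact: addrC.
Qed.

Lemma ctC : ct Cm = ac%:M + bc *: N.
Proof. by rewrite /Cm scalemx1 ctD ctZ ct_scalar !conjc_real hN. Qed.

Lemma ctB : ct Bm = ac%:M + - (bc *: (S *m N)).
Proof.
by rewrite /Bm scalemx1 ctD ctZ ct_scalar !conjc_real ctM hN hS mulmxN hSN scalerN.
Qed.

Lemma SNSN : S *m N *m (S *m N) = - (N *m N).
Proof. by rewrite mulmxA -(mulmxA S N S) -hSN mulmxA hSS !mulNmx mul1mx. Qed.

Lemma CctC : Cm *m ct Cm = Bm *m ct Bm + (ac * bc + ac * bc) *: N.
Proof.
rewrite ctC ctB /Bm /Cm !scalemx1 !expand.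
rewrite scalerN addrN add0r mulmxN -!scalemxAl -!scalemxAr SNSN !scalerN opprK.
rewrite !scalerA scalerDl.
by rewrite [RHS]addrAC addrA.
Qed.

Lemma key (x : 'rV[C]_n) :
  nrm (x *m Bm *m invmx Cm) =
  nrm x - (ac * bc + ac * bc) * ((x *m invmx Cm) *m N *m ct (x *m invmx Cm)) 0 0.
Proof.
set z := x *m invmx Cm.
have xz : x = z *m Cm by rewrite /z mulmxKV // Cunit.
have -> : x *m Bm *m invmx Cm = z *m Bm.
  by rewrite xz -(mulmxA z Cm Bm) -BC_comm mulmxA mulmxK // Cunit.
clearbody z; rewrite xz /nrm !ctM !mulmxA -(mulmxA z Cm) CctC mulmxDr mulmxDl.
rewrite mxE -scalemxAr -scalemxAl mxE !mulmxA.
by rewrite [X in _ + X - _]mxE addrK [RHS]mxE.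
Qed.
End Key.

Lemma map_conj_scalar k (a : C) : map_mx (@conjc R) (a%:M : 'M_k) = ((a^*)%C)%:M.
Proof. exact: (map_scalar_mx (@conjc R) k a). Qed.

Lemma blk_comm k (p q r t : C) (Nn : 'M[C]_k) :
  block_mx p%:M q%:M r%:M t%:M *m block_mx Nn 0 0 Nn =
  block_mx Nn 0 0 Nn *m block_mx p%:M q%:M r%:M t%:M.
Proof.
by rewrite !mulmx_block !mulmx0 !mul0mx !addr0 !add0r !mul_scalar_mx !mul_mx_scalar.
Qed.

Lemma blk_sq k (p q r t : C) :
  block_mx (p%:M : 'M_k) q%:M r%:M t%:M *m block_mx p%:M q%:M r%:M t%:M =
  block_mx (p * p + q * r)%:M (p * q + q * t)%:M (r * p + t * r)%:M (r * q + t * t)%:M.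
Proof. by rewrite mulmx_block -!scalar_mxM !raddfD. Qed.

Lemma ci : ('i%C)^*%C = - 'i%C :> C.
Proof. by apply/eqP; rewrite eq_complex /= oppr0 !eqxx. Qed.

Lemma cmx0 k : cmx (0 : 'M[R]_k) = 0.
Proof. by apply/matrixP=> i j; rewrite !mxE. Qed.

Lemma cmx_blk k (Mm : 'M[R]_k) : cmx (block_mx Mm 0 0 Mm) = block_mx (cmx Mm) 0 0 (cmx Mm).
Proof. by rewrite /cmx map_block_mx -!/(cmx _) !cmx0. Qed.

Lemma blk_sym k (Mm : 'M[R]_k) : Mm^T = Mm -> (block_mx Mm 0 0 Mm)^T = block_mx Mm 0 0 Mm.
Proof. by move=> h; rewrite tr_block_mx !trmx0 h. Qed.

Lemma blk_spsd k (Mm : 'M[R]_k) : spsd Mm -> spsd (block_mx Mm 0 0 Mm).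
Proof.
move=> [sM hM]; split; first exact: blk_sym.
move=> x; rewrite -[x]vsubmxK tr_col_mx mul_row_block !mulmx0 ?mul0mx addr0 add0r.
by rewrite mul_row_col mxE addr_ge0.
Qed.

Lemma blk_spd k (Mm : 'M[R]_k) : spd Mm -> spd (block_mx Mm 0 0 Mm).
Proof.
move=> hMd; have [sM hM] := hMd; have [_ hM0] := spd_spsd hMd.
split; first exact: blk_sym.
move=> x nx; rewrite -[x]vsubmxK tr_col_mx mul_row_block !mulmx0 ?mul0mx addr0 add0r.
rewrite mul_row_col mxE.
have [u0|nu] := eqVneq (usubmx x) 0.
  have nd : dsubmx x != 0.
    by apply: contra nx => /eqP d0; rewrite -[x]vsubmxK u0 d0; apply/eqP/matrixP=> i j; rewrite !mxE; case: splitP => ? _; rewrite mxE.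
  by rewrite -[0]add0r; apply: ler_ltD; [apply: hM0| apply: hM].
by rewrite -[0]addr0; apply: ltr_leD; [apply: hM| apply: hM0].
Qed.

Section Spec.
Variables (m : nat) (nu omega : R).
Hypotheses (hnu : 0 < nu) (hom : 0 < omega).

Lemma theta_gt0 : 0 < theta nu omega.
Proof. by rewrite /theta; apply: ltr_pwDl => //; apply: mulr_ge0; [apply: ltW|apply: sqr_ge0]. Qed.

Let cc := ((omega * nu)%:C)%C : C.
Let sv := ((Num.sqrt nu)%:C)%C : C.

Lemma Rmx_eq : Rmx m nu omega = (sq nu omega)^-1 *:
  block_mx ((- 'i%C * cc)%:M) (sv%:M) ((- sv)%:M) (('i%C * cc)%:M).
Proof. by rewrite /Rmx !scalemx1. Qed.

Lemma sq_sq : sq nu omega * sq nu omega = cc * cc + sv * sv.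
Proof.
have h : 0 <= nu * theta nu omega by apply: mulr_ge0; apply: ltW => //; apply: theta_gt0.
apply/eqP; rewrite eq_complex /= !mul0r !mulr0 !subr0 !addr0 eqxx andbT.
rewrite -!expr2 !sqr_sqrtr ?(ltW hnu) // /theta; apply/eqP; ring.
Qed.

Lemma sq_neq0 : sq nu omega != 0.
Proof.
rewrite /sq; apply/eqP => /(congr1 (@complex.Re R)) /= /eqP.
by rewrite sqrtr_eq0 lt_geF // mulr_gt0 // theta_gt0.
Qed.

Lemma RR : Rmx m nu omega *m Rmx m nu omega = - 1%:M.
Proof.
rewrite Rmx_eq -scalemxAl -scalemxAr scalerA blk_sq.
have h := sqr_i R; rewrite expr2 in h.
have e1 : - 'i%C * cc * (- 'i%C * cc) + sv * - sv = - (cc * cc + sv * sv).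
  have t1 : - 'i%C * cc * (- 'i%C * cc) = ('i%C * 'i%C) * (cc * cc) by ring.
  by rewrite t1 h; ring.
have e2 : - 'i%C * cc * sv + sv * ('i%C * cc) = 0 by ring.
have e3 : - sv * (- 'i%C * cc) + 'i%C * cc * - sv = 0 by ring.
have e4 : - sv * sv + 'i%C * cc * ('i%C * cc) = - (cc * cc + sv * sv).
  have t1 : 'i%C * cc * ('i%C * cc) = ('i%C * 'i%C) * (cc * cc) by ring.
  by rewrite t1 h; ring.
rewrite e1 e2 e3 e4 raddf0 -scalar_mx_block -sq_sq -scalemx1 scalerA -scaleN1r scalemx1.
rewrite scaleN1r (_ : _ * - _ = -1) ?raddfN //.
have := sq_neq0; move: (sq nu omega) => x hx; field; exact: hx.
Qed.

Lemma ctR : ct (Rmx m nu omega) = - Rmx m nu omega.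
Proof.
rewrite Rmx_eq ctZ conjc_inv conjc_real -scalerN; congr (_ *: _).
rewrite /ct map_block_mx tr_block_mx !map_conj_scalar !tr_scalar_mx opp_block_mx.
have e1 : ((- 'i%C * cc)^*)%C = - (- 'i%C * cc).
  by rewrite /cc; apply/eqP; rewrite eq_complex /=; apply/andP; split; apply/eqP; ring.
have e2 : ((- sv)^*)%C = - sv.
  by rewrite /sv; apply/eqP; rewrite eq_complex /=; apply/andP; split; apply/eqP; ring.
have e3 : (sv^*)%C = - - sv by rewrite opprK /sv conjc_real.
have e4 : (('i%C * cc)^*)%C = - ('i%C * cc).
  by rewrite /cc; apply/eqP; rewrite eq_complex /=; apply/andP; split; apply/eqP; ring.
by rewrite e1 e2 e3 e4 !raddfN.
Qed.

Lemma RH_comm (Mm : 'M[R]_m) : Rmx m nu omega *m cmx (block_mx Mm 0 0 Mm) =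
  cmx (block_mx Mm 0 0 Mm) *m Rmx m nu omega.
Proof. by rewrite Rmx_eq cmx_blk -scalemxAl blk_comm scalemxAr. Qed.
End Spec.

Lemma nrmZ n (c : C) (x : 'rV[C]_n) : nrm (c *: x) = c * (c^*)%C * nrm x.
Proof.
by rewrite /nrm ctZ -scalemxAl -scalemxAr scalerA mxE.
Qed.
End Work.

Unset Implicit Arguments.

Theorem mainTheorem3 (R : rcfType) (m : nat) (M K : 'M[R]_m) (nu omega : R) :
  spsd M -> spsd K -> (spd M \/ spd K) -> 0 < nu -> 0 < omega ->
  forall alpha : R, 0 < alpha ->
    spectral_radius_lt (Palpha M K nu omega alpha) 1.
Proof.
move=> hM hK hpd hnu hom alpha hal lam /eigenvalueP [v hv nv].
have hMb := blk_spsd hM; have hKb := blk_spsd hK.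
have sMb : ct (cmx (block_mx M 0 0 M)) = cmx (block_mx M 0 0 M).
  by rewrite ct_cmx blk_sym // hM.1.
have sKb : ct (cmx (block_mx K 0 0 K)) = cmx (block_mx K 0 0 K).
  by rewrite ct_cmx blk_sym // hK.1.
have hRR := RR m omega hnu; have hct := ctR m nu omega.
have hth : 0 < theta nu omega by apply: theta_gt0.
have hs : 0 <= Num.sqrt (nu * theta nu omega) by apply: sqrtr_ge0.
have k1 := key sMb hct hRR (RH_comm nu omega M) hal (ltW hth) (form_ge0 hMb).
have hctN : ct (- Rmx m nu omega) = - - Rmx m nu omega by rewrite ctN hct.
have hRRN : - Rmx m nu omega *m - Rmx m nu omega = - 1%:M by rewrite mulNmx mulmxN opprK.
have hRHN : - Rmx m nu omega *m cmx (block_mx K 0 0 K) = cmx (block_mx K 0 0 K) *m - Rmx m nu omega.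
  by rewrite mulNmx mulmxN RH_comm.
have k2 := key sKb hctN hRRN hRHN hal hs (form_ge0 hKb).
have u1 := Cunit hal (ltW hth) (form_ge0 hMb).
have u2 := Cunit hal hs (form_ge0 hKb).
rewrite /Palpha /H1 /H2 /= in hv.
rewrite -/(sq nu omega) in k2 u2.
have eD : alpha%:C%C *: 1%:M - sq nu omega *: (Rmx m nu omega *m cmx (block_mx K 0 0 K)) =
  alpha%:C%C *: 1%:M + sq nu omega *: (- Rmx m nu omega *m cmx (block_mx K 0 0 K)).
  by rewrite mulNmx scalerN.
rewrite eD in hv.
set H1m := cmx (block_mx M 0 0 M) in k1 hv u1 *.
set H2m := cmx (block_mx K 0 0 K) in k2 hv u2 *.
set Am := alpha%:C%C *: 1%:M + sq nu omega *: H2m in k2 hv u2 *.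
set Cm := alpha%:C%C *: 1%:M + (theta nu omega)%:C%C *: H1m in k1 hv u1 *.
set Bm := alpha%:C%C *: 1%:M + (theta nu omega)%:C%C *: (Rmx m nu omega *m H1m) in k1 hv *.
set Dm := alpha%:C%C *: 1%:M + sq nu omega *: (- Rmx m nu omega *m H2m) in k2 hv *.
have fg1 : forall z, 0 <= (z *m H1m *m ct z) 0 0 := form_ge0 hMb.
have fg2 : forall z, 0 <= (z *m H2m *m ct z) 0 0 := form_ge0 hKb.
have fq1 : spd M -> forall z, z != 0 -> 0 < (z *m H1m *m ct z) 0 0 :=
  fun h => form_gt0 (blk_spd h).
have fq2 : spd K -> forall z, z != 0 -> 0 < (z *m H2m *m ct z) 0 0 :=
  fun h => form_gt0 (blk_spd h).
clearbody H1m H2m Am Cm Bm Dm.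
set x := v *m invmx Am.
have vx : v = x *m Am by rewrite /x (mulmxKV u2).
have nx : x != 0 by apply: contra nv => /eqP x0; rewrite vx x0 mul0mx.
have hx : x *m Bm *m invmx Cm *m Dm *m invmx Am = lam *: x.
  by rewrite /x scalemxAl -hv !mulmxA.
clearbody x.
have e1 := k1 x.
set y := x *m Bm *m invmx Cm in hx e1.
clearbody y.
have e2 : nrm (lam *: x) = nrm y -
    (alpha%:C%C * sq nu omega + alpha%:C%C * sq nu omega) *
    (y *m invmx Am *m H2m *m ct (y *m invmx Am)) 0 0.
  by rewrite -hx; exact: k2 y.
have nz1 : x *m invmx Cm != 0.
  apply: contra nx => /eqP z0; apply/eqP.
  by rewrite -(mulmxKV u1 x) z0 mul0mx.
have nz2 : lam != 0 -> y *m invmx Am != 0.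
  move=> nl; apply: contra nl => /eqP z0.
  have : lam *: x = 0 by rewrite -hx -(mulmxKV u2 y) z0 !mul0mx.
  by move/eqP; rewrite scaler_eq0 (negbTE nx) orbF.
have f1p := fg1 (x *m invmx Cm).
have f2p := fg2 (y *m invmx Am).
have f1q : spd M -> 0 < (x *m invmx Cm *m H1m *m ct (x *m invmx Cm)) 0 0.
  by move=> hMd; apply: fq1.
have f2q : spd K -> lam != 0 -> 0 < (y *m invmx Am *m H2m *m ct (y *m invmx Am)) 0 0.
  by move=> hKd nl; apply: fq2 => //; apply: nz2.
rewrite nrmZ e1 in e2.
move: e2 f1p f2p f1q f2q.
move: (x *m invmx Cm *m H1m *m _) (y *m invmx Am *m H2m *m _) => F1 F2.
move: (F1 0 0) (F2 0 0) => f1 f2 e2 f1p f2p f1q f2q.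
have [->|nl] := eqVneq lam 0; first by rewrite normr0 ltr01.
have nxp : 0 < nrm x.
  by rewrite lt_def nrm_ge0 andbT; apply/eqP => /nrm_eq0 /eqP; apply/negP.
have c1p : 0 < alpha%:C%C * (theta nu omega)%:C%C + alpha%:C%C * (theta nu omega)%:C%C.
  by apply: addr_gt0; apply: mulr_gt0; apply: Cpos.
have sp : 0 < Num.sqrt (nu * theta nu omega) by rewrite sqrtr_gt0 mulr_gt0.
have c2p : 0 < alpha%:C%C * sq nu omega + alpha%:C%C * sq nu omega.
  by apply: addr_gt0; apply: mulr_gt0; apply: Cpos.
have T : 0 < (alpha%:C%C * (theta nu omega)%:C%C + alpha%:C%C * (theta nu omega)%:C%C) * f1
   + (alpha%:C%C * sq nu omega + alpha%:C%C * sq nu omega) * f2.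
  case: hpd => [hMd|hKd].
    rewrite -[0]addr0; apply: ltr_leD; last exact/mulr_ge0/f2p/ltW.
    exact: mulr_gt0 (f1q hMd).
  rewrite -[0]add0r; apply: ler_ltD; first exact/mulr_ge0/f1p/ltW.
  exact: mulr_gt0 (f2q hKd nl).
have : lam * (lam^*)%C * nrm x < nrm x by rewrite e2 -addrA -opprD gtrBl.
rewrite -[X in _ < X]mul1r ltr_pM2r // -sqr_normc expr_lt1 //.
Qed.
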